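(* Let $S$ be a square-free semigroup, $D$ a division ring, $(\alpha,\xi)\in Z^2(S,D^* )$ a normal 2-cocycle and $R=D^{\alpha}_{\xi}S$. Then the map $\Lambda: H^1_{(\alpha,\xi)}(S,D^* )\to\mathrm{Out}\,R$ given by $B^1_{(\alpha,\xi)}(S,D^* )\,(\mu,\eta)\mapsto(\mathrm{Inn}\,R)\,\sigma_{\mu\eta}$ for $(\mu,\eta)\in Z^1_{(\alpha,\xi)}(S,D^* )$ is a monomorphism (injective group homomorphism).
   Context: $D$ is a division ring, $D^*$ its group of units, $\mathrm{Aut}(D)$ its ring automorphism group, $\rho_d(x)=dxd^{-1}$, $1_D$ the identity of $\mathrm{Aut}(D)$. A square-free semigroup is a semigroup $S$ (product $s\cdot t$) with zero $\theta$ and a finite set $E\subseteq S$ of nonzero pairwise orthogonal idempotents with $S=\bigcup_{e,f\in E}e\cdot S\cdot f$ and $|e\cdot S\cdot f\setminus\{\theta\}|\le 1$; $S^*=S\setminus\{\theta\}$ and each $s\in S^*$ equals $e\cdot s\cdot f$ for unique $e,f\in E$. $S^{<0>}=E$, $S^{<n>}=\{(s_1,\dots,s_n)\in S^n:s_1\cdots s_n\ne\theta\}$, $F^n(S,G)$ the group of functions $S^{<n>}\to G$; $\alpha_s=\alpha(s)$, $\mu_e=\mu(e)$. A 2-cocycle is $(\alpha,\xi)\in F^1(S,\mathrm{Aut}(D))\times F^2(S,D^* )$ with $\alpha_s(\xi(t,u))\xi(s,t\cdot u)=\xi(s,t)\xi(s\cdot t,u)$ on $S^{<3>}$ and $\alpha_s\circ\alpha_t=\rho_{\xi(s,t)}\circ\alpha_{s\cdot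 t}$ on $S^{<2>}$; $Z^2(S,D^* )$ is their set; normal means $\alpha_e=1_D$, $\xi(e,e)=1$ for $e\in E$. $D^{\alpha}_{\xi}S$ is the ring which is the left $D$-vector space with basis $S^*$, multiplication extended by distributivity from $(d_1s)(d_2t)=d_1\alpha_s(d_2)\xi(s,t)(s\cdot t)$ if $s\cdot t\ne\theta$, $0$ otherwise. $\mathrm{Aut}\,R$ is the ring automorphism group, $\mathrm{Inn}\,R$ the normal subgroup of conjugations $x\mapsto rxr^{-1}$ by units $r$, $\mathrm{Out}\,R=\mathrm{Aut}\,R/\mathrm{Inn}\,R$. $Z^1_{(\alpha,\xi)}(S,D^* )$ is the subgroup of $F^0(S,\mathrm{Aut}(D))\ltimes F^1(S,D^* )$ of pairs $(\mu,\eta)$ with $\mu_e\circ\alpha_s\circ\mu_f^{-1}=\rho_{\eta(s)}\circ\alpha_s$ for all $s=e\cdot s\cdot f\in S^*$ and $\mu_e(\xi(s,t))=\eta(s)\alpha_s(\eta(t))\xi(s,t)\eta(s\cdot t)^{-1}$ for all $(s,t)\in S^{<2>}$ with $s=e\cdot s$. $B^1_{(\alpha,\xi)}(S,D^* )$ is the normal subgroup of $Z^1_{(\alpha,\xi)}(S,D^* )$ consisting of the pairs $(\mu,\eta)$ for which there is $\epsilon\in F^0(S,D^* )$ with $\mu_e=\rho_{\epsilon(e)}$ for all $e\in E$ and $\eta(s)=\epsilon(e)\alpha_s(\epsilon(f)^{-1})$ for all $s=e\cdot s\cdot f\in S^*$. $H^1_{(\alpha,\xi)}(S,D^* )=Z^1_{(\alpha,\xi)}(S,D^*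 )/B^1_{(\alpha,\xi)}(S,D^* )$. For $(\mu,\eta)\in Z^1_{(\alpha,\xi)}(S,D^* )$, $\sigma_{\mu\eta}:R\to R$ is the additive map with $\sigma_{\mu\eta}(ds)=\mu_e(d)\eta(s)s$ for $d\in D$, $s=e\cdot s\in S^*$; it is a ring automorphism of $R$. *)

(* Defs.v *)
From HB Require Import structures.
From mathcomp Require Import all_boot all_order all_algebra.
Set Implicit Arguments. Unset Strict Implicit. Unset Printing Implicit Defensive.
Import GRing.Theory.
Local Open Scope ring_scope.

Unset Implicit Arguments.
Section SF.
Variables (S : finType) (op : S -> S -> S) (th : S) (E : {set S}).

Definition square_free : Prop :=
  (forall s t u, op s (op t u) = op (op s t) u) /\
  [/\ (forall s, op th s = th /\ op s th = th),
      (forall e, e \in E -> e != th /\ op e e = e),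
      (forall e f, e \in E -> f \in E -> e != f -> op e f = th),
      (forall s, exists e f t, [/\ e \in E, f \in E & s = op (op e t) f]) &
      (forall e f, e \in E -> f \in E ->
         #|[set op (op e t) f | t in S] :\ th| <= 1)%N].

Definition Sstar := {s : S | s != th}.

Definition lidem (s : S) : S := odflt th [pick e in E | op e s == s].

End SF.
Arguments Sstar {S}.
Arguments lidem {S}.
Arguments square_free {S}.

Definition division_ring (D : unitRingType) : Prop :=
  forall x : D, x != 0 -> x \is a GRing.unit.

Definition ring_aut (D : unitRingType) (m : D -> D) : Prop :=
  [/\ bijective m, (forall x y, m (x + y) = m x + m y),
      (forall x y, m (x * y) = m x * m y) & m 1 = 1].

Definition rho (D : unitRingType) (d : D) : D -> D := fun x => d * x * d^-1.
Arguments ring_aut {D}.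
Arguments rho {D}.
Arguments division_ring : clear implicits.

Unset Implicit Arguments.
Section Cocycle.
Variables (S : finType) (op : S -> S -> S) (th : S) (E : {set S}).
Variables (D : unitRingType) (al : S -> D -> D) (xi : S -> S -> D).

(* (al, xi) in Z^2(S, D^* ): al on S^<1> = S^*, xi on S^<2> *)
Definition cocycle2 : Prop :=
  [/\ (forall s, s != th -> ring_aut (al s)),
      (forall s t, op s t != th -> xi s t != 0),
      (forall s t u, op (op s t) u != th ->
         al s (xi t u) * xi s (op t u) = xi s t * xi (op s t) u) &
      (forall s t, op s t != th ->
         forall x, al s (al t x) = rho (xi s t) (al (op s t) x))].

Definition normal_cocycle : Prop :=
  forall e, e \in E -> (forall x, al e x = x) /\ xi e e = 1.

(* elements: left D-linear combinations of the basis S^*, i.e. coefficient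
   functions S^* -> D *)
Definition Rcar := {ffun Sstar th -> D}.

Definition Rmul (x y : Rcar) : Rcar :=
  [ffun u : Sstar th => \sum_(s : Sstar th) \sum_(t : Sstar th |
        op (val s) (val t) == val u) x s * al (val s) (y t) * xi (val s) (val t)].

Definition Rone : Rcar := [ffun u : Sstar th => if val u \in E then 1 else 0].

Definition R_aut (phi : Rcar -> Rcar) : Prop :=
  [/\ bijective phi, (forall x y, phi (x + y) = phi x + phi y) &
      (forall x y, phi (Rmul x y) = Rmul (phi x) (phi y))].

Definition R_inner (c : Rcar -> Rcar) : Prop :=
  exists r r' : Rcar, [/\ Rmul r r' = Rone, Rmul r' r = Rone &
                          forall x, c x = Rmul (Rmul r x) r'].

(* an element (mu, eta) of F^0(S,Aut D) x| F^1(S,D^* ); mu is only relevant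
   on E and eta only on S^* *)
Definition Fpair := ((S -> D -> D) * (S -> D))%type.

Definition inZ1 (z : Fpair) : Prop :=
  let: (mu, eta) := z in
  [/\ (forall e, e \in E -> ring_aut (mu e)),
      (forall s, s != th -> eta s != 0),
      (* mu_e o al_s o mu_f^{-1} = rho_{eta s} o al_s, composed with mu_f *)
      (forall s e f, s != th -> e \in E -> f \in E -> op (op e s) f = s ->
         forall x, mu e (al s x) = rho (eta s) (al s (mu f x))) &
      (forall s t e, op s t != th -> e \in E -> op e s = s ->
         mu e (xi s t) = eta s * al s (eta t) * xi s t * (eta (op s t))^-1)].

Definition inB1 (z : Fpair) : Prop :=
  inZ1 z /\
  let: (mu, eta) := z in
  exists eps : S -> D,
    [/\ (forall e, e \in E -> eps e != 0),
        (forall e, e \in E -> forall x, mu e x = rho (eps e) x) &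
        (forall s e f, s != th -> e \in E -> f \in E -> op (op e s) f = s ->
           eta s = eps e * al s ((eps f)^-1))].

(* group law of the semidirect product, chosen so that
   sigma_{z z'} = sigma_z o sigma_{z'} *)
Definition mulZ (z z' : Fpair) : Fpair :=
  let: (mu, eta) := z in let: (mu', eta') := z' in
  (fun e x => mu e (mu' e x), fun s => mu (lidem op th E s) (eta' s) * eta s).

Definition eqF (z z' : Fpair) : Prop :=
  (forall e, e \in E -> forall x, z.1 e x = z'.1 e x) /\
  (forall s, s != th -> z.2 s = z'.2 s).

Definition inB1coset (z' z : Fpair) : Prop :=
  exists b, inB1 b /\ eqF z' (mulZ b z).

(* sigma_{mu eta}(d s) = mu_e(d) eta(s) s for s = e.s *)
Definition sigma (z : Fpair) (x : Rcar) : Rcar :=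
  [ffun u : Sstar th => z.1 (lidem op th E (val u)) (x u) * z.2 (val u)].

End Cocycle.
Arguments cocycle2 {S} op th {D} al xi.
Arguments normal_cocycle {S} E {D} al xi.
Arguments Rmul {S} op th {D} al xi.
Arguments Rone {S} th E {D}.
Arguments R_aut {S} op th {D} al xi.
Arguments R_inner {S} op th E {D} al xi.
Arguments inZ1 {S} op th E {D} al xi.
Arguments inB1 {S} op th E {D} al xi.
Arguments inB1coset {S} op th E {D} al xi.
Arguments mulZ {S} op th E {D}.
Arguments sigma {S} op th E {D}.
Arguments eqF {S} th E {D}.

(* Main.v *)
Require Import Defs.
From HB Require Import structures.
From mathcomp Require Import all_boot all_order all_algebra.
Import GRing.Theory.
Local Open Scope ring_scope.
Set Implicit Arguments. Unset Strict Implicit.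

Section Main.
Variables (S : finType) (op : S -> S -> S) (th : S) (E : {set S}).
Hypothesis HS : square_free op th E.

Definition rid (s : S) : S := odflt th [pick f in E | op s f == s].
Local Notation lid := (lidem op th E).

Lemma opA s t u : op s (op t u) = op (op s t) u.
Proof. by case: HS. Qed.
Lemma th_l s : op th s = th.
Proof. by case: HS => _ [H _ _ _ _]; case: (H s). Qed.
Lemma th_r s : op s th = th.
Proof. by case: HS => _ [H _ _ _ _]; case: (H s). Qed.
Lemma E_nth e : e \in E -> e != th.
Proof. by case: HS => _ [_ H _ _ _] /H []. Qed.
Lemma E_idem e : e \in E -> op e e = e.
Proof. by case: HS => _ [_ H _ _ _] /H []. Qed.
Lemma E_orth e f : e \in E -> f \in E -> e != f -> op e f = th.
Proof. by case: HS => _ [_ _ H _ _]; apply: H. Qed.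

Lemma decomp s : exists e f, [/\ e \in E, f \in E, op e s = s & op s f = s].
Proof.
case: HS => _ [_ _ _ H _]; have [e [f [t [He Hf ->]]]] := H s.
exists e, f; split => //.
- by rewrite !opA E_idem.
- by rewrite -!opA E_idem.
Qed.

Lemma Euniq_l e e' s : e \in E -> e' \in E -> op e s = s -> op e' s = s ->
  s != th -> e = e'.
Proof.
move=> He He' H1 H2 Hs; apply/eqP; apply: contraNT Hs => Hne.
by rewrite -H2 -H1 opA (@E_orth e' e He' He) ?th_l // eq_sym.
Qed.

Lemma Euniq_r e e' s : e \in E -> e' \in E -> op s e = s -> op s e' = s ->
  s != th -> e = e'.
Proof.
move=> He He' H1 H2 Hs; apply/eqP; apply: contraNT Hs => Hne.
by rewrite -H1 -H2 -opA (@E_orth e' e He' He) ?th_r // eq_sym.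
Qed.

Lemma lid_spec s : lid s \in E /\ op (lid s) s = s.
Proof.
rewrite /lidem; case: pickP => [e /andP [He /eqP H] | H] //=.
have [e [f [He _ Hes _]]] := decomp s.
by move: (H e); rewrite He Hes eqxx.
Qed.

Lemma rid_spec s : rid s \in E /\ op s (rid s) = s.
Proof.
rewrite /rid; case: pickP => [e /andP [He /eqP H] | H] //=.
have [e [f [_ Hf _ Hsf]]] := decomp s.
by move: (H f); rewrite Hf Hsf eqxx.
Qed.

Lemma lidE e s : e \in E -> op e s = s -> s != th -> lid s = e.
Proof. by move=> He H Hs; case: (lid_spec s) => H1 H2; apply: Euniq_l H2 H Hs. Qed.
Lemma ridE e s : e \in E -> op s e = s -> s != th -> rid s = e.
Proof. by move=> He H Hs; case: (rid_spec s) => H1 H2; apply: Euniq_r H2 H Hs. Qed.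

Lemma lidEE e : e \in E -> lid e = e.
Proof. by move=> He; apply: lidE => //; [apply: E_idem | apply: E_nth]. Qed.
Lemma ridEE e : e \in E -> rid e = e.
Proof. by move=> He; apply: ridE => //; [apply: E_idem | apply: E_nth]. Qed.

Lemma lid_mul s t : op s t != th -> lid (op s t) = lid s.
Proof.
move=> H; case: (lid_spec s) => H1 H2.
by apply: lidE => //; rewrite opA H2.
Qed.
Lemma rid_mul s t : op s t != th -> rid (op s t) = rid t.
Proof.
move=> H; case: (rid_spec t) => H1 H2.
by apply: ridE => //; rewrite -opA H2.
Qed.
Lemma rid_lid s t : op s t != th -> rid s = lid t.
Proof.
move=> H; case: (rid_spec s) => H1 H2; case: (lid_spec t) => H3 H4.
apply/eqP; apply: contraNT H => Hne.
by rewrite -H2 -H4 -opA (opA (rid s)) (@E_orth _ _ H1 H3) // th_l th_r.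
Qed.

Lemma eSe u : u != th -> lid u = rid u -> u \in E.
Proof.
move=> Hu Hlr; case: (lid_spec u) => He H1; case: (rid_spec u) => _ H2.
set e := lid u in He H1 Hlr.
case: HS => _ [_ _ _ _ H]; have := H e e He He.
move/card_le1_eqP => Hc.
have Ae : e \in [set op (op e t) e | t in S] :\ th.
  rewrite !inE E_nth //=; apply/imsetP; exists e => //; by rewrite !E_idem.
have Au : u \in [set op (op e t) e | t in S] :\ th.
  rewrite !inE Hu /=; apply/imsetP; exists u => //; by rewrite H1 Hlr H2.
have Heq : u = e by [apply: Hc] || (symmetry; apply: Hc). by rewrite Heq.
Qed.

Lemma nth_l s t : op s t != th -> s != th.
Proof. by apply: contraNneq => ->; rewrite th_l. Qed.
Lemma nth_r s t : op s t != th -> t != th.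
Proof. by apply: contraNneq => ->; rewrite th_r. Qed.

Variable D : unitRingType.
Hypothesis HD : division_ring D.
Variables (al : S -> D -> D) (xi : S -> S -> D).
Hypothesis Hc : cocycle2 op th al xi.
Hypothesis Hn : normal_cocycle E al xi.

Lemma unitD (x : D) : x != 0 -> x \is a GRing.unit.
Proof. exact: HD. Qed.

Section Aut.
Variable m : D -> D.
Hypothesis Hm : ring_aut m.
Lemma raut_add x y : m (x + y) = m x + m y. Proof. by case: Hm. Qed.
Lemma raut_mul x y : m (x * y) = m x * m y. Proof. by case: Hm. Qed.
Lemma raut1 : m 1 = 1. Proof. by case: Hm. Qed.
Lemma raut0 : m 0 = 0.
Proof. by apply: (@addrI _ (m 0)); rewrite -raut_add !addr0. Qed.
Lemma raut_inj : injective m. Proof. by case: Hm => /bij_inj. Qed.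
Lemma raut_neq0 x : x != 0 -> m x != 0.
Proof. by apply: contraNneq => H; apply/eqP; apply: raut_inj; rewrite H raut0. Qed.
Lemma raut_sum I (r : seq I) (P : pred I) (F : I -> D) :
  m (\sum_(i <- r | P i) F i) = \sum_(i <- r | P i) m (F i).
Proof. exact: (big_morph m raut_add raut0). Qed.
Lemma raut_inv x : x != 0 -> m (x^-1) = (m x)^-1.
Proof.
move=> Hx; have Ux := unitD Hx; have Um := unitD (raut_neq0 Hx).
have H : m x * m x^-1 = 1 by rewrite -raut_mul mulrV // raut1.
by rewrite -[m x^-1](mulKr Um) H mulr1.
Qed.
End Aut.

Lemma al_aut s : s != th -> ring_aut (al s).
Proof. by case: Hc => H _ _ _; apply: H. Qed.
Lemma xi_neq0 s t : op s t != th -> xi s t != 0.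
Proof. by case: Hc => _ H _ _; apply: H. Qed.
Lemma al_E e x : e \in E -> al e x = x.
Proof. by move=> He; case: (Hn He) => H _; apply: H. Qed.
Lemma xi_E e : e \in E -> xi e e = 1.
Proof. by move=> He; case: (Hn He). Qed.

Lemma xi_l1 e s : e \in E -> op e s = s -> s != th -> xi e s = 1.
Proof.
move=> He Hes Hs; case: Hc => _ _ H _.
have := H e e s; rewrite E_idem // Hes => /(_ Hs).
rewrite al_E // xi_E // mul1r => Hx.
by apply: (mulIr (unitD (xi_neq0 (s:=e) (t:=s) _))); rewrite ?Hes // mul1r.
Qed.

Lemma xi_r1 f s : f \in E -> op s f = s -> s != th -> xi s f = 1.
Proof.
move=> Hf Hsf Hs; case: Hc => _ _ H _.
have := H s f f; rewrite Hsf E_idem // Hsf => /(_ Hs).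
rewrite xi_E // raut1 ?mul1r; last exact: al_aut.
move=> Hx; apply/esym.
by apply: (mulIr (unitD (xi_neq0 (s:=s) (t:=f) _))); rewrite ?Hsf // mul1r.
Qed.

Local Notation Rc := (Rcar S th D).
Local Notation RM := (Rmul op th al xi).

Definition diag (g : S -> D) : Rc := [ffun u => if val u \in E then g (val u) else 0].

Definition mkS (s : S) (Hs : s != th) : Sstar th := exist _ s Hs.

Lemma L1 g (y : Rc) u : RM (diag g) y u = g (lid (val u)) * y u.
Proof.
rewrite /Rmul ffunE.
have [He Hlu] := lid_spec (val u).
have Hu := valP u.
rewrite (bigD1 (mkS (E_nth He))) //= [X in _ + X]big1 ?addr0; last first.
  move=> s Hs; rewrite ffunE; case: ifP => HsE; last first.
    by rewrite big1 // => t _; rewrite !mul0r.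
  rewrite big1 // => t /eqP Hst; exfalso; move/negP: Hs; apply.
  apply/eqP/val_inj => /=.
  have Hne : op (val s) (val t) != th by rewrite Hst.
  by rewrite -Hst lid_mul // lidEE.
rewrite (bigD1 u) ?Hlu //= [X in _ + X]big1 ?addr0; last first.
  move=> t /andP [/eqP Ht Htu]; exfalso; move/negP: Htu; apply.
  apply/eqP/val_inj => /=; rewrite -[in RHS]Ht.
  have Hne : op (lid (val u)) (val t) != th by rewrite Ht.
  have Hl := rid_lid Hne; rewrite ridEE // in Hl.
  by case: (lid_spec (val t)) => _; rewrite -Hl.
by rewrite ffunE /= He al_E // xi_l1 // mulr1.
Qed.

Lemma L2 g (y : Rc) u : RM y (diag g) u = y u * al (val u) (g (rid (val u))).
Proof.
rewrite /Rmul ffunE.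
have [Hf Hru] := rid_spec (val u).
have Hu := valP u.
rewrite (bigD1 u) //= [X in _ + X]big1 ?addr0; last first.
  move=> s Hs; rewrite big1 // => t /eqP Hst; rewrite ffunE; case: ifP => HtE; last first.
    by rewrite raut0 ?mulr0 ?mul0r //; apply: al_aut; apply: (valP s).
  exfalso; move/negP: Hs; apply; apply/eqP/val_inj => /=.
  have Hne : op (val s) (val t) != th by rewrite Hst.
  have Hl := rid_lid Hne; rewrite lidEE // in Hl.
  by case: (rid_spec (val s)) => _; rewrite Hl Hst.
rewrite (bigD1 (mkS (E_nth Hf))) ?Hru //= [X in _ + X]big1 ?addr0; last first.
  move=> t /andP [/eqP Ht Htu]; rewrite ffunE; case: ifP => HtE; last first.
    by rewrite raut0 ?mulr0 ?mul0r //; apply: al_aut.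
  exfalso; move/negP: Htu; apply; apply/eqP/val_inj => /=.
  have Hne : op (val u) (val t) != th by rewrite Ht.
  by rewrite -Ht rid_mul // ridEE.
by rewrite ffunE /= Hf xi_r1 // mulr1.
Qed.

Lemma L3 (y w : Rc) u (f0 : Sstar th) :
  (forall v, y v != 0 -> rid (val v) = val f0) -> rid (val u) = val f0 ->
  RM y w u = y u * al (val u) (w f0).
Proof.
move=> Hy Hr; rewrite /Rmul ffunE.
have Hu := valP u.
have [HfE Hru] := rid_spec (val u); rewrite Hr in HfE Hru.
rewrite (bigD1 u) //= [X in _ + X]big1 ?addr0; last first.
  move=> s Hs; rewrite big1 // => t /eqP Hst.
  have [Hys|Hys] := eqVneq (y s) 0; first by rewrite Hys !mul0r.
  exfalso; move/negP: Hs; apply; apply/eqP/val_inj => /=.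
  have Hne : op (val s) (val t) != th by rewrite Hst.
  have H1 := rid_mul Hne; rewrite Hst Hr in H1.
  have H2 := rid_lid Hne; rewrite Hy // in H2.
  have HtE : val t \in E by apply: eSe; [apply: (valP t) | rewrite -H1 -H2].
  have Ht : val t = val f0 by rewrite -(ridEE HtE).
  by case: (rid_spec (val s)) => _; rewrite Hy // -Ht Hst => <-.
rewrite (bigD1 f0) ?Hru //= [X in _ + X]big1 ?addr0; last first.
  move=> t /andP [/eqP Ht Htu]; exfalso; move/negP: Htu; apply; apply/eqP/val_inj.
  have Hne : op (val u) (val t) != th by rewrite Ht.
  have H1 := rid_mul Hne; rewrite Ht Hr in H1.
  have H2 := rid_lid Hne; rewrite Hr in H2.
  have HtE : val t \in E by apply: eSe; [apply: (valP t) | rewrite -H1 -H2].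
  by rewrite -(ridEE HtE).
by rewrite xi_r1 // mulr1.
Qed.

Local Notation sig := (sigma op th E).

Section Z.
Variables (mu : S -> D -> D) (eta : S -> D).
Hypothesis Hz : inZ1 op th E al xi (mu, eta).

Lemma mu_aut e : e \in E -> ring_aut (mu e).
Proof. by case: Hz => H _ _ _; apply: H. Qed.
Lemma mul_aut s : ring_aut (mu (lid s)).
Proof. by apply: mu_aut; case: (lid_spec s). Qed.
Lemma eta_neq0 s : s != th -> eta s != 0.
Proof. by case: Hz => _ H _ _; apply: H. Qed.
Lemma Z3 s x : s != th -> mu (lid s) (al s x) = rho (eta s) (al s (mu (rid s) x)).
Proof.
case: Hz => _ _ H _ Hs; case: (lid_spec s) => H1 H2; case: (rid_spec s) => H3 H4.
by apply: H => //; rewrite H2.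
Qed.
Lemma Z4 s t : op s t != th ->
  mu (lid s) (xi s t) = eta s * al s (eta t) * xi s t * (eta (op s t))^-1.
Proof.
case: Hz => _ _ _ H Hs; case: (lid_spec s) => H1 H2.
by apply: H.
Qed.
Lemma eta_E e : e \in E -> eta e = 1.
Proof.
move=> He; have Hee : op e e != th by rewrite E_idem // E_nth.
have := Z4 Hee; rewrite lidEE // xi_E // (raut1 (mu_aut He)) (al_E _ He) mulr1 E_idem //.
move=> H; have U := unitD (eta_neq0 (E_nth He)).
by rewrite (mulrK U) in H.
Qed.

Lemma sig_add x y : sig (mu, eta) (x + y) = sig (mu, eta) x + sig (mu, eta) y.
Proof.
by apply/ffunP => u; rewrite !ffunE /= raut_add ?mulrDl //; apply: mul_aut.
Qed.

Lemma sig_mul x y : sig (mu, eta) (RM x y) = RM (sig (mu, eta) x) (sig (mu, eta) y).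
Proof.
apply/ffunP => u; rewrite !ffunE /= raut_sum ?mulr_suml; last exact: mul_aut.
apply: eq_bigr => s _; rewrite raut_sum ?mulr_suml; last exact: mul_aut.
apply: eq_bigr => t /eqP Hst; rewrite !ffunE /=.
have Hne : op (val s) (val t) != th by rewrite Hst; apply: (valP u).
have Hs : val s != th := nth_l Hne.
have Ht : val t != th := nth_r Hne.
have Ha := al_aut Hs.
have Hm := mul_aut (val s).
have Hst' : op (sval s) (sval t) = sval u := Hst.
rewrite -Hst' lid_mul // !(raut_mul Hm).
rewrite Z3 // Z4 // /rho (rid_lid Hne) (raut_mul Ha).
have U1 := unitD (eta_neq0 Hs); have U2 := unitD (eta_neq0 Hne).
rewrite !mulrA (mulrVK U1) (mulrVK U2).
done.
Qed.

Lemma sig_bij : bijective (sig (mu, eta)).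
Proof.
have Hinj : injective (sig (mu, eta)).
  move=> x x' H; apply/ffunP => u; move/ffunP: H => /(_ u); rewrite !ffunE /=.
  move/(mulIr (unitD (eta_neq0 (valP u)))); apply: raut_inj; exact: mul_aut.
have Hsurj : forall y, exists x, sig (mu, eta) x == y.
  move=> y.
  have Hu : forall u : Sstar th, exists d, mu (lid (val u)) d == y u * (eta (val u))^-1.
    move=> u; case: (mul_aut (val u)) => [[g _ Hg] _ _ _].
    by exists (g (y u * (eta (val u))^-1)); rewrite Hg.
  exists [ffun u => xchoose (Hu u)]; apply/eqP/ffunP => u; rewrite !ffunE /=.
  by rewrite (eqP (xchooseP (Hu u))) (mulrVK (unitD (eta_neq0 (valP u)))).
exists (fun y => xchoose (Hsurj y)).
  by move=> x; apply: Hinj; rewrite (eqP (xchooseP (Hsurj _))).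
by move=> y; rewrite (eqP (xchooseP (Hsurj _))).
Qed.

Lemma sig_aut : R_aut op th al xi (sig (mu, eta)).
Proof. split; [exact: sig_bij | exact: sig_add | exact: sig_mul]. Qed.

Lemma sig_basisE e : e \in E ->
  sig (mu, eta) (diag (fun s => if s == e then 1 else 0)) = diag (fun s => if s == e then 1 else 0).
Proof.
move=> He; apply/ffunP => u; rewrite !ffunE /=; case: ifP => HuE.
  rewrite lidEE // eta_E // mulr1; case: eqP => _; [exact: raut1 (mu_aut HuE) | exact: raut0 (mu_aut HuE)].
by rewrite raut0 ?mul0r //; apply: mul_aut.
Qed.

End Z.

Lemma unit_neq0 (x : D) : x \is a GRing.unit -> x != 0.
Proof. by apply: contraTneq => ->; rewrite unitr0. Qed.

Lemma rho_aut (d : D) : d != 0 -> ring_aut (rho d).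
Proof.
move=> Hd; have U := unitD Hd; split.
- apply: (@Bijective _ _ _ (rho d^-1)) => x; rewrite /rho invrK !mulrA.
    by rewrite mulVr // mul1r mulrVK.
  by rewrite mulrV // mul1r mulrK.
- by move=> x y; rewrite /rho mulrDr mulrDl.
- by move=> x y; rewrite /rho !mulrA mulrVK.
- by rewrite /rho mulr1 mulrV.
Qed.

Definition epsinv (eps : S -> D) : S -> D := fun s => (eps s)^-1.

Lemma Rone_diag : Rone th E = diag (fun _ => 1).
Proof. by apply/ffunP => u; rewrite !ffunE. Qed.

Lemma inner_diag eps : (forall e, e \in E -> eps e != 0) ->
  R_inner op th E al xi (fun x => RM (RM (diag eps) x) (diag (epsinv eps))).
Proof.
move=> He; exists (diag eps), (diag (epsinv eps)); split => //.
- apply/ffunP => u; rewrite L1 !ffunE; case: ifP => // HuE.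
  by rewrite lidEE // /epsinv mulrV //; apply: unitD; apply: He.
  by rewrite mulr0.
- apply/ffunP => u; rewrite L1 !ffunE; case: ifP => // HuE.
  by rewrite lidEE // /epsinv mulVr //; apply: unitD; apply: He.
  by rewrite mulr0.
Qed.

Lemma inner_diagE eps (y : Rc) u :
  RM (RM (diag eps) y) (diag (epsinv eps)) u =
  eps (lid (val u)) * y u * al (val u) ((eps (rid (val u)))^-1).
Proof. by rewrite L2 L1. Qed.

Definition basisx (s : S) (x : D) : Rc := [ffun u => if val u == s then x else 0].

Lemma sig_basisx mu eta s (Hs : s != th) x :
  sig (mu, eta) (basisx s x) (mkS Hs) = mu (lid s) x * eta s.
Proof. by rewrite !ffunE /= eqxx. Qed.

Lemma basisx_at s (Hs : s != th) x : basisx s x (mkS Hs) = x.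
Proof. by rewrite ffunE /= eqxx. Qed.

Lemma part3 z z' : inZ1 op th E al xi z -> inZ1 op th E al xi z' ->
  exists c, R_inner op th E al xi c /\
    forall x, sig (mulZ op th E z z') x = c (sig z (sig z' x)).
Proof.
case: z => mu eta; case: z' => mu' eta' Hz Hz'.
have H1 : forall e, e \in E -> (fun _ : S => (1 : D)) e != 0 by move=> *; apply: oner_neq0.
exists (fun x => RM (RM (diag (fun _ => 1)) x) (diag (epsinv (fun _ => 1)))); split.
  exact: inner_diag.
move=> x; apply/ffunP => u; rewrite inner_diagE /epsinv invr1.
have Ha := al_aut (valP u).
rewrite (raut1 Ha) mulr1 mul1r !ffunE /=.
by rewrite (raut_mul (mul_aut Hz _)) mulrA.
Qed.

Lemma part2f z z' : inZ1 op th E al xi z -> inZ1 op th E al xi z' ->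
  inB1coset op th E al xi z' z ->
  exists c, R_inner op th E al xi c /\ forall x, sig z' x = c (sig z x).
Proof.
case: z => mu eta; case: z' => mu' eta' Hz Hz' [[mub etab] [[Hb [eps [He Hmu Heta]]] [Hq1 Hq2]]].
exists (fun x => RM (RM (diag eps) x) (diag (epsinv eps))); split.
  exact: inner_diag.
move=> x; apply/ffunP => u; rewrite inner_diagE !ffunE /=.
have Hu := valP u.
have [Hl Hlu] := lid_spec (val u); have [Hr Hru] := rid_spec (val u).
simpl in Hq1, Hq2.
rewrite Hq1 // Hq2 //= Hmu // Hmu // (Heta (val u) (lid (val u)) (rid (val u))) //;
  last by rewrite Hlu Hru.
have U := unitD (He _ Hl).
by rewrite /rho !mulrA !(mulrVK U).
Qed.

Section Cob.
Variable eps : S -> D.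
Hypothesis Heps : forall e, e \in E -> eps e != 0.

Definition cob : Fpair S D :=
  (fun e => rho (eps e), fun s => eps (lid s) * al s ((eps (rid s))^-1)).

Lemma Ueps s : eps (lid s) \is a GRing.unit.
Proof. by apply: unitD; apply: Heps; case: (lid_spec s). Qed.
Lemma Uepsr s : eps (rid s) \is a GRing.unit.
Proof. by apply: unitD; apply: Heps; case: (rid_spec s). Qed.

Lemma cob_eta_neq0 s : s != th -> cob.2 s != 0.
Proof.
move=> Hs; rewrite /=; apply: unit_neq0; rewrite unitrMr ?Ueps //.
apply: unitD; apply: (raut_neq0 (al_aut Hs)); apply: unit_neq0.
by rewrite unitrV Uepsr.
Qed.

Lemma cob_Z1 : inZ1 op th E al xi cob.
Proof.
split.
- by move=> e He /=; apply: rho_aut; apply: Heps.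
- exact: cob_eta_neq0.
- move=> s e f Hs He Hf Hesf x /=.
  have Hes : op e s = s by rewrite -Hesf !opA E_idem.
  have Hsf : op s f = s by rewrite -Hesf -opA E_idem.
  rewrite -(lidE He Hes Hs) -(ridE Hf Hsf Hs).
  have Ha := al_aut Hs.
  have UB : al s (eps (rid s)) \is a GRing.unit.
    by apply: unitD; apply: (raut_neq0 Ha); apply: unit_neq0; apply: Uepsr.
  rewrite /rho (raut_inv Ha) ?unit_neq0 ?Uepsr //.
  rewrite invrM ?unitrV // ?Ueps // invrK !(raut_mul Ha) (raut_inv Ha) ?unit_neq0 ?Uepsr //.
  by rewrite !mulrA !(mulrVK UB).
- move=> s t e Hst He Hes /=.
  have Hs := nth_l Hst; have Ht := nth_r Hst.
  rewrite -(lidE He Hes Hs) lid_mul // rid_mul // -(rid_lid Hst).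
  have Ha := al_aut Hs; have Hb := al_aut Ht; have Hab := al_aut Hst.
  have UB : al s (eps (rid s)) \is a GRing.unit.
    by apply: unitD; apply: (raut_neq0 Ha); apply: unit_neq0; apply: Uepsr.
  have UC : al (op s t) (eps (rid t))^-1 \is a GRing.unit.
    apply: unitD; apply: (raut_neq0 Hab); apply: unit_neq0.
    by rewrite unitrV Uepsr.
  have UX : xi s t \is a GRing.unit by apply: unitD; apply: xi_neq0.
  have Hco : al s (al t (eps (rid t))^-1) =
             rho (xi s t) (al (op s t) (eps (rid t))^-1).
    by case: Hc => _ _ _ H; apply: H.
  rewrite (raut_mul Ha) Hco (raut_inv Ha) ?unit_neq0 ?Uepsr // invrM ?Ueps //.
  by rewrite /rho !mulrA (mulrVK UB) (mulrVK UX) (mulrK UC).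
Qed.

Lemma cob_B1 : inB1 op th E al xi cob.
Proof.
split; first exact: cob_Z1.
exists eps; split => //.
move=> s e f Hs He Hf Hesf /=.
have Hes : op e s = s by rewrite -Hesf !opA E_idem.
have Hsf : op s f = s by rewrite -Hesf -opA E_idem.
by rewrite (lidE He Hes Hs) (ridE Hf Hsf Hs).
Qed.
End Cob.

Definition getc (y : Rc) (s : S) : D :=
  match insub s with Some v => y v | None => 0 end.
Lemma getcE y u : getc y (val u) = y u.
Proof. by rewrite /getc valK. Qed.

Lemma part2b z z' : inZ1 op th E al xi z -> inZ1 op th E al xi z' ->
  (exists c, R_inner op th E al xi c /\ forall x, sig z' x = c (sig z x)) ->
  inB1coset op th E al xi z' z.
Proof.
case: z => mu eta; case: z' => mu' eta' Hz Hz' [c [[r [r' [Hrr Hr'r Hcx]]] H]].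
have Hmain : forall x, sig (mu', eta') x = RM (RM r (sig (mu, eta) x)) r'.
  by move=> x; rewrite H Hcx.
have KeyA : forall (e0 u : Sstar th), val e0 \in E -> rid (val u) = val e0 ->
    (if val u \in E then (if val u == val e0 then 1 else 0) else 0)
    = r u * al (val u) (r' e0).
  move=> e0 u He0 Hru.
  have Hb := Hmain (diag (fun s => if s == val e0 then 1 else 0)).
  rewrite (sig_basisE Hz) // (sig_basisE Hz') // in Hb.
  have Hy : forall v, RM r (diag (fun s => if s == val e0 then 1 else 0)) v =
      if rid (val v) == val e0 then r v else 0.
    move=> v; rewrite L2; have Ha := al_aut (valP v).
    by case: eqP => _; [rewrite (raut1 Ha) mulr1 | rewrite (raut0 Ha) mulr0].
  move/ffunP: Hb => /(_ u); rewrite ffunE => ->.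
  rewrite (@L3 _ _ _ e0) //; last first.
    by move=> v; rewrite Hy; case: (rid (val v) =P val e0) => // _; rewrite eqxx.
  by rewrite Hy Hru eqxx.
have KeyB : forall e0 : Sstar th, val e0 \in E -> r e0 * r' e0 = 1.
  move=> e0 He0; have := KeyA e0 e0 He0 (ridEE He0).
  by rewrite He0 eqxx al_E.
have KeyC : forall u : Sstar th, val u \notin E -> r u = 0.
  move=> u HuE; have [Hf _] := rid_spec (val u).
  have := KeyA (mkS (E_nth Hf)) u Hf erefl.
  rewrite (negbTE HuE) => /esym H0.
  have Hr' : r' (mkS (E_nth Hf)) != 0.
    apply/eqP => H1; have := KeyB (mkS (E_nth Hf)) Hf; rewrite H1 mulr0 => /eqP.
    by rewrite eq_sym oner_eq0.
  have U := unitD (raut_neq0 (al_aut (valP u)) Hr').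
  by rewrite -(mulrK U (r u)) H0 mul0r.
set eps := getc r.
have Hrd : r = diag eps.
  apply/ffunP => u; rewrite ffunE; case: ifP => HuE; first by rewrite /eps getcE.
  by rewrite KeyC // HuE.
have Heps : forall e, e \in E -> eps e != 0.
  move=> e He; have := KeyB (mkS (E_nth He)) He.
  rewrite /eps -(getcE r (mkS (E_nth He))) /=.
  move=> H1; apply/eqP => H0; move: H1; rewrite H0 mul0r => /eqP; by rewrite eq_sym oner_eq0.
have Hr'd : r' = diag (epsinv eps).
  apply/ffunP => u; move/ffunP: Hrr => /(_ u).
  rewrite Hrd L1 !ffunE.
  have [Hl _] := lid_spec (val u).
  have U := unitD (Heps _ Hl).
  case: ifP => HuE.
    rewrite lidEE // /epsinv => H1.
    by rewrite -(mulKr (unitD (Heps _ HuE)) (r' u)) H1 mulr1.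
  by move=> H0; rewrite -(mulKr U (r' u)) H0 mulr0.
have Hm' : forall x (u : Sstar th), sig (mu', eta') x u =
    eps (lid (val u)) * sig (mu, eta) x u * al (val u) ((eps (rid (val u)))^-1).
  by move=> x u; rewrite Hmain Hrd Hr'd inner_diagE.
exists (cob eps); split; first exact: cob_B1.
split.
- move=> e He x /=.
  have He' := E_nth He.
  have := Hm' (basisx e x) (mkS He').
  rewrite !sig_basisx /= lidEE // ridEE // (eta_E Hz) // (eta_E Hz') // !mulr1 al_E //.
- move=> s Hs /=.
  have := Hm' (basisx s 1) (mkS Hs).
  rewrite !sig_basisx /= (raut1 (mul_aut Hz _)) (raut1 (mul_aut Hz' _)) !mul1r => ->.
  have U := Ueps Heps s.
  by rewrite /rho !mulrA (mulrVK U).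
Qed.

End Main.

Unset Implicit Arguments. Set Strict Implicit.
Close Scope ring_scope.

Theorem mainTheorem4 (S : finType) (op : S -> S -> S) (th : S) (E : {set S})
  (HS : square_free op th E)
  (D : unitRingType) (HD : division_ring D)
  (al : S -> D -> D) (xi : S -> S -> D)
  (Hc : cocycle2 op th al xi) (Hn : normal_cocycle E al xi) :
  (forall z, inZ1 op th E al xi z -> R_aut op th al xi (sigma op th E z)) /\
  (forall z z', inZ1 op th E al xi z -> inZ1 op th E al xi z' ->
     (inB1coset op th E al xi z' z <->
      exists c, R_inner op th E al xi c /\
                forall x, sigma op th E z' x = c (sigma op th E z x))) /\
  (forall z z', inZ1 op th E al xi z -> inZ1 op th E al xi z' ->
     exists c, R_inner op th E al xi c /\
       forall x, sigma op th E (mulZ op th E z z') x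
                 = c (sigma op th E z (sigma op th E z' x))).
Proof.
split; [|split].
- by case=> mu eta Hz; apply: sig_aut.
- move=> z z' Hz Hz'; split; [exact: part2f | exact: part2b].
- exact: part3.
Qed.
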